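(* Let $\Sigma_2$ be a hyperelliptic curve of genus $2$ given by $y^2=P_5(x)$, with $P_5$ a polynomial of degree $5$. Let $(\lambda_i,x_i,y_i)$, $i=1,\dots,6$, be six points with $y_i^2=P_5(x_i)$, in generic position. Consider the system of six equations in the six unknowns $H=(H_1,\dots,H_6)$ \[ \lambda_i^4+(H_4+x_iH_5+x_i^2H_6)\lambda_i^2+(H_1+x_iH_2+x_i^2H_3)^2=0,\qquad i=1,\dots,6, \] which expresses that the spectral curve of the Hitchin system for $\mathfrak{so}(4)$ on $\Sigma_2$ passes through the six points. Then this system can be reduced to a single polynomial equation of degree $4$ in one unknown. Consequently the system is solvable in radicals, i.e. the Hamiltonians (action coordinates) $H_1,\dots,H_6$ can be expressed in radicals in terms of $\lambda_i,x_i$.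
   Context: For the Hitchin system for the Lie algebra $\mathfrak{so}(4)$ (type $D_2$) on a genus-$2$ hyperelliptic curve $y^2=P_5(x)$, the spectral curve $\det(\lambda-L)=0$ ($L$ the Lax operator) has the explicit form \[ R(\lambda,x,y,H)=\lambda^4+(H_4+xH_5+x^2H_6)\lambda^2+(H_1+xH_2+x^2H_3)^2=0, \] where the two degree-$2$ fundamental invariants of $\mathfrak{so}(4)$ (the quadratic invariant and the Pfaffian) evaluated on $L$ are expanded over the basis $\{1,x,x^2\}$, and the coefficients $H_1,\dots,H_6$ are the Hamiltonians of the system. The phase space is parametrized by $N=\dim\mathfrak{g}\cdot(g-1)=6$ points $(\lambda_i,x_i,y_i)$ on the spectral curve. *)

(* Defs.v *)
From HB Require Import structures.
From mathcomp Require Import all_boot all_order all_algebra all_field.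
Set Implicit Arguments. Unset Strict Implicit. Unset Printing Implicit Defensive.
Import GRing.Theory.
Local Open Scope ring_scope.

(* Spectral curve of the so(4) Hitchin system on a genus-2 curve:
   R(lambda, x, H) = lambda^4 + (H4 + x H5 + x^2 H6) lambda^2 + (H1 + x H2 + x^2 H3)^2.
   H : 'I_6 -> L with H 0 = H_1, ..., H 5 = H_6. *)
Definition spectralR (L : ringType) (H : 'I_6 -> L) (lam x : L) : L :=
  lam ^+ 4
  + (H (inord 3) + x * H (inord 4) + x ^+ 2 * H (inord 5)) * lam ^+ 2
  + (H (inord 0) + x * H (inord 1) + x ^+ 2 * H (inord 2)) ^+ 2.

Definition is_solution (L : ringType) (lam x : 'I_6 -> L) (H : 'I_6 -> L) : Prop :=
  forall i : 'I_6, spectralR H (lam i) (x i) = 0.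

Inductive rad_expr (L : fieldType) (ok : nat -> bool) (S : seq L) : L -> Prop :=
| RE_gen z : z \in S -> rad_expr ok S z
| RE_one : rad_expr ok S 1
| RE_add a b : rad_expr ok S a -> rad_expr ok S b -> rad_expr ok S (a + b)
| RE_opp a : rad_expr ok S a -> rad_expr ok S (- a)
| RE_mul a b : rad_expr ok S a -> rad_expr ok S b -> rad_expr ok S (a * b)
| RE_inv a : rad_expr ok S a -> rad_expr ok S a^-1
| RE_root (n : nat) w : ok n -> rad_expr ok S (w ^+ n) -> rad_expr ok S w.

Definition rational_in (L : fieldType) (S : seq L) := rad_expr (fun _ => false) S.
Definition sqrt_expr_in (L : fieldType) (S : seq L) := rad_expr (fun n => n == 2)%N S.
Definition radical_in (L : fieldType) (S : seq L) := rad_expr (fun n => 0 < n)%N S.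

Definition data_seq (L : ringType) (lam x : 'I_6 -> L) : seq L :=
  [seq lam i | i <- enum 'I_6] ++ [seq x i | i <- enum 'I_6].

(* environment for evaluating a genericity polynomial in the 18 variables
   lambda_1..6 ('X_0..'X_5), x_1..6 ('X_6..'X_11), y_1..6 ('X_12..'X_17) *)
Definition point_env (L : ringType) (lam x y : 'I_6 -> L) : seq L :=
  [seq lam i | i <- enum 'I_6] ++ [seq x i | i <- enum 'I_6]
  ++ [seq y i | i <- enum 'I_6].

Definition on_curve (L : ringType) (P5 : {poly L}) (x y : 'I_6 -> L) : Prop :=
  forall i : 'I_6, y i ^+ 2 = P5.[x i].

(* Main.v *)
From Stdlib Require Import ZArith.
Require Import Defs.
From HB Require Import structures.
From mathcomp Require Import all_boot all_order all_algebra all_field.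
From mathcomp Require Import ring zify ssrZ.
Set Implicit Arguments. Unset Strict Implicit. Unset Printing Implicit Defensive.
Import GRing.Theory.
Local Open Scope ring_scope.
Local Delimit Scope Z_scope with coqZ.

Section Core.
Variable L : closedFieldType.

Record v3 := V3 { c0 : L; c1 : L; c2 : L }.
Record s3 := S3 { m00 : L; m01 : L; m02 : L; m11 : L; m12 : L; m22 : L }.

Definition qf (M : s3) (v w : v3) : L :=
  m00 M * c0 v * c0 w + m01 M * (c0 v * c1 w + c1 v * c0 w)
  + m02 M * (c0 v * c2 w + c2 v * c0 w) + m11 M * c1 v * c1 w
  + m12 M * (c1 v * c2 w + c2 v * c1 w) + m22 M * c2 v * c2 w.
Definition mulv (M : s3) (v : v3) : v3 :=
  V3 (m00 M * c0 v + m01 M * c1 v + m02 M * c2 v)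
     (m01 M * c0 v + m11 M * c1 v + m12 M * c2 v)
     (m02 M * c0 v + m12 M * c1 v + m22 M * c2 v).
Definition dot (v w : v3) := c0 v * c0 w + c1 v * c1 w + c2 v * c2 w.
Definition det (M : s3) : L :=
  m00 M * (m11 M * m22 M - m12 M ^+ 2) - m01 M * (m01 M * m22 M - m12 M * m02 M)
  + m02 M * (m01 M * m12 M - m11 M * m02 M).
Definition A00 M := m11 M * m22 M - m12 M ^+ 2.
Definition A01 M := m02 M * m12 M - m01 M * m22 M.
Definition A02 M := m01 M * m12 M - m02 M * m11 M.
Definition A11 M := m00 M * m22 M - m02 M ^+ 2.
Definition A12 M := m01 M * m02 M - m00 M * m12 M.
Definition A22 M := m00 M * m11 M - m01 M ^+ 2.
Definition col0 M := V3 (A00 M) (A01 M) (A02 M).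
Definition col1 M := V3 (A01 M) (A11 M) (A12 M).
Definition col2 M := V3 (A02 M) (A12 M) (A22 M).
Definition trAG (M G : s3) : L :=
  A00 M * m00 G + 2 * A01 M * m01 G + 2 * A02 M * m02 G + A11 M * m11 G
  + 2 * A12 M * m12 G + A22 M * m22 G.
Definition splus (F G : s3) (s : L) : s3 :=
  S3 (m00 F + s * m00 G) (m01 F + s * m01 G) (m02 F + s * m02 G)
     (m11 F + s * m11 G) (m12 F + s * m12 G) (m22 F + s * m22 G).
Definition zero3 := V3 0 0 0.

Lemma qf_dot M v w : qf M v w = dot v (mulv M w).
Proof. by case: M => *; case: v => *; case: w => *; rewrite /qf /dot /=; ring. Qed.
Lemma qfC M v w : qf M v w = qf M w v.
Proof. by case: M => *; case: v => *; case: w => *; rewrite /qf /=; ring. Qed.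

Lemma mul_col0 M : mulv M (col0 M) = V3 (det M) 0 0.
Proof. by case: M => *; rewrite /mulv /col0 /det /A00 /A01 /A02 /=; congr V3; ring. Qed.
Lemma mul_col1 M : mulv M (col1 M) = V3 0 (det M) 0.
Proof. by case: M => *; rewrite /mulv /col1 /det /A01 /A11 /A12 /=; congr V3; ring. Qed.
Lemma mul_col2 M : mulv M (col2 M) = V3 0 0 (det M).
Proof. by case: M => *; rewrite /mulv /col2 /det /A02 /A12 /A22 /=; congr V3; ring. Qed.
Lemma min01 M : A00 M * A11 M - A01 M ^+ 2 = det M * m22 M.
Proof. by case: M => *; rewrite /det /A00 /A01 /A11 /=; ring. Qed.
Lemma min02 M : A00 M * A22 M - A02 M ^+ 2 = det M * m11 M.
Proof. by case: M => *; rewrite /det /A00 /A02 /A22 /=; ring. Qed.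
Lemma min12 M : A11 M * A22 M - A12 M ^+ 2 = det M * m00 M.
Proof. by case: M => *; rewrite /det /A11 /A12 /A22 /=; ring. Qed.
Lemma minj0 M : A00 M * A12 M - A01 M * A02 M = - (det M * m12 M).
Proof. by case: M => *; rewrite /det /A00 /A01 /A02 /A12 /=; ring. Qed.
Lemma minj1 M : A11 M * A02 M - A01 M * A12 M = - (det M * m02 M).
Proof. by case: M => *; rewrite /det /A11 /A01 /A02 /A12 /=; ring. Qed.
Lemma minj2 M : A22 M * A01 M - A02 M * A12 M = - (det M * m01 M).
Proof. by case: M => *; rewrite /det /A22 /A01 /A02 /A12 /=; ring. Qed.
Lemma qf_col0 M G : qf G (col0 M) (col0 M) = A00 M * trAG M G -
  (m11 G * (A00 M * A11 M - A01 M ^+ 2) + m22 G * (A00 M * A22 M - A02 M ^+ 2)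
   + 2 * m12 G * (A00 M * A12 M - A01 M * A02 M)).
Proof. by rewrite /qf /trAG /col0 /=; ring. Qed.
Lemma qf_col1 M G : qf G (col1 M) (col1 M) = A11 M * trAG M G -
  (m00 G * (A00 M * A11 M - A01 M ^+ 2) + m22 G * (A11 M * A22 M - A12 M ^+ 2)
   + 2 * m02 G * (A11 M * A02 M - A01 M * A12 M)).
Proof. by rewrite /qf /trAG /col1 /=; ring. Qed.
Lemma qf_col2 M G : qf G (col2 M) (col2 M) = A22 M * trAG M G -
  (m00 G * (A00 M * A22 M - A02 M ^+ 2) + m11 G * (A11 M * A22 M - A12 M ^+ 2)
   + 2 * m01 G * (A22 M * A01 M - A02 M * A12 M)).
Proof. by rewrite /qf /trAG /col2 /=; ring. Qed.

Lemma kernel_lemma M G : det M = 0 -> trAG M G != 0 ->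
  exists k, [/\ k = col0 M \/ k = col1 M \/ k = col2 M,
            mulv M k = zero3 & qf G k k != 0].
Proof.
move=> hd htr.
have i01 := min01 M; have i02 := min02 M; have i12 := min12 M.
have j0 := minj0 M; have j1 := minj1 M; have j2 := minj2 M.
rewrite hd !mul0r oppr0 in i01 i02 i12 j0 j1 j2.
have [h0|h0] := eqVneq (A00 M) 0.
  have [h1|h1] := eqVneq (A11 M) 0.
    have [h2|h2] := eqVneq (A22 M) 0.
      exfalso; move: htr; rewrite /trAG h0 h1 h2.
      have sq0 (z : L) : z ^+ 2 = 0 -> z = 0.
        by move/eqP; rewrite expf_eq0 => /andP[_ /eqP].
      have e01 : A01 M = 0.
        by apply: sq0; move: i01; rewrite h0 mul0r sub0r => /eqP; rewrite oppr_eq0 => /eqP.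
      have e02 : A02 M = 0.
        by apply: sq0; move: i02; rewrite h0 mul0r sub0r => /eqP; rewrite oppr_eq0 => /eqP.
      have e12 : A12 M = 0.
        by apply: sq0; move: i12; rewrite h1 mul0r sub0r => /eqP; rewrite oppr_eq0 => /eqP.
      by rewrite e01 e02 e12 !(mulr0, mul0r, addr0) eqxx.
    exists (col2 M); split; [by right; right | by rewrite mul_col2 hd |].
    by rewrite qf_col2 i02 i12 j2 !mulr0 !addr0 subr0 mulf_neq0.
  exists (col1 M); split; [by right; left | by rewrite mul_col1 hd |].
  by rewrite qf_col1 i01 i12 j1 !mulr0 !addr0 subr0 mulf_neq0.
exists (col0 M); split; [by left | by rewrite mul_col0 hd |].
by rewrite qf_col0 i01 i02 j0 !mulr0 !addr0 subr0 mulf_neq0.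
Qed.

Definition p0 (F G : s3) := det F.
Definition p1 (F G : s3) := trAG F G.
Definition p2 (F G : s3) := trAG G F.
Definition p3 (F G : s3) := det G.
Definition disc (a0 a1 a2 a3 : L) :=
  a2 ^+ 2 * a1 ^+ 2 - 4 * a3 * a1 ^+ 3 - 4 * a2 ^+ 3 * a0 - 27 * a3 ^+ 2 * a0 ^+ 2
  + 18 * a3 * a2 * a1 * a0.

Lemma det_splus F G s :
  det (splus F G s) = p0 F G + p1 F G * s + p2 F G * s ^+ 2 + p3 F G * s ^+ 3.
Proof.
by case: F => *; case: G => *; rewrite /det /splus /p0 /p1 /p2 /p3 /trAG
  /A00 /A01 /A02 /A11 /A12 /A22 /det /=; ring.
Qed.
Lemma trAG_splus F G s :
  trAG (splus F G s) G = p1 F G + 2 * p2 F G * s + 3 * p3 F G * s ^+ 2.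
Proof.
by case: F => *; case: G => *; rewrite /splus /p1 /p2 /p3 /trAG
  /A00 /A01 /A02 /A11 /A12 /A22 /det /=; ring.
Qed.
Lemma qf_splus F G s v w : qf (splus F G s) v w = qf F v w + s * qf G v w.
Proof. by rewrite /qf /splus /=; ring. Qed.

Lemma sqrt_exists (d : L) : exists r, r ^+ 2 = d.
Proof.
have /closed_rootP [r hr] : size ('X^2 - d%:P) != 1%N.
  by rewrite size_XnsubC.
by exists r; move: hr; rewrite /root !hornerE subr_eq0 => /eqP.
Qed.

Lemma nth_root_exists (n : nat) (d : L) : (0 < n)%N -> exists r, r ^+ n = d.
Proof.
move=> hn.
have /closed_rootP [r hr] : size ('X^n - d%:P) != 1%N.
  by rewrite size_XnsubC // eqSS -lt0n.
by exists r; move: hr; rewrite /root !hornerE subr_eq0 => /eqP.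
Qed.

Lemma orth F G T T' k k' :
  mulv (splus F G T) k = zero3 -> mulv (splus F G T') k' = zero3 -> T != T' ->
  qf G k k' = 0 /\ qf F k k' = 0.
Proof.
move=> h h' hT.
have e1 : qf (splus F G T) k' k = 0 by rewrite qf_dot h /dot /=; ring.
have e2 : qf (splus F G T') k k' = 0 by rewrite qf_dot h' /dot /=; ring.
rewrite !qf_splus in e1 e2.
rewrite (qfC F k' k) (qfC G k' k) in e1.
have hG : qf G k k' = 0.
  have : (T - T') * qf G k k' = 0.
    have -> : (T - T') * qf G k k' =
      (qf F k k' + T * qf G k k') - (qf F k k' + T' * qf G k k') by ring.
    by rewrite e1 e2 subr0.
  by move/eqP; rewrite mulf_eq0 subr_eq0 (negbTE hT) /= => /eqP.
split=> //; apply/eqP; move/eqP: e2; rewrite hG mulr0 addr0.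
by [].
Qed.

Lemma qf_self F G T k : mulv (splus F G T) k = zero3 -> qf F k k = - (T * qf G k k).
Proof.
move=> h; have e1 : qf (splus F G T) k k = 0 by rewrite qf_dot h /dot /=; ring.
by rewrite qf_splus in e1; apply/eqP; rewrite -addr_eq0 e1.
Qed.

Definition tdet (w1 w2 w3 : v3) :=
  c0 w1 * (c1 w2 * c2 w3 - c2 w2 * c1 w3) - c1 w1 * (c0 w2 * c2 w3 - c2 w2 * c0 w3)
  + c2 w1 * (c0 w2 * c1 w3 - c1 w2 * c0 w3).

Lemma cauchy_binet w1 w2 w3 k1 k2 k3 :
  tdet w1 w2 w3 * tdet k1 k2 k3 =
  tdet (V3 (dot w1 k1) (dot w1 k2) (dot w1 k3))
       (V3 (dot w2 k1) (dot w2 k2) (dot w2 k3))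
       (V3 (dot w3 k1) (dot w3 k2) (dot w3 k3)).
Proof. by rewrite /tdet /dot /=; ring. Qed.

Lemma cramer w1 w2 w3 e : tdet w1 w2 w3 != 0 ->
  dot w1 e = 0 -> dot w2 e = 0 -> dot w3 e = 0 -> e = zero3.
Proof.
move=> hd h1 h2 h3.
have k0 : tdet w1 w2 w3 * c0 e = (c1 w2 * c2 w3 - c2 w2 * c1 w3) * dot w1 e
  + (c1 w3 * c2 w1 - c2 w3 * c1 w1) * dot w2 e + (c1 w1 * c2 w2 - c2 w1 * c1 w2) * dot w3 e.
  by rewrite /tdet /dot; ring.
have k1 : tdet w1 w2 w3 * c1 e = (c2 w2 * c0 w3 - c0 w2 * c2 w3) * dot w1 e
  + (c2 w3 * c0 w1 - c0 w3 * c2 w1) * dot w2 e + (c2 w1 * c0 w2 - c0 w1 * c2 w2) * dot w3 e.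
  by rewrite /tdet /dot; ring.
have k2 : tdet w1 w2 w3 * c2 e = (c0 w2 * c1 w3 - c1 w2 * c0 w3) * dot w1 e
  + (c0 w3 * c1 w1 - c1 w3 * c0 w1) * dot w2 e + (c0 w1 * c1 w2 - c1 w1 * c0 w2) * dot w3 e.
  by rewrite /tdet /dot; ring.
rewrite h1 h2 h3 !mulr0 !addr0 in k0 k1 k2.
move/eqP: k0; move/eqP: k1; move/eqP: k2; rewrite !mulf_eq0 (negbTE hd) /=.
by case: e {h1 h2 h3} => x y z /= /eqP -> /eqP -> /eqP ->.
Qed.

Definition lin3 (a1 a2 a3 : L) (k1 k2 k3 : v3) :=
  V3 (a1 * c0 k1 + a2 * c0 k2 + a3 * c0 k3)
     (a1 * c1 k1 + a2 * c1 k2 + a3 * c1 k3)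
     (a1 * c2 k1 + a2 * c2 k2 + a3 * c2 k3).

Lemma qf_lin3 M a1 a2 a3 k1 k2 k3 :
  qf M (lin3 a1 a2 a3 k1 k2 k3) (lin3 a1 a2 a3 k1 k2 k3) =
  a1 ^+ 2 * qf M k1 k1 + a2 ^+ 2 * qf M k2 k2 + a3 ^+ 2 * qf M k3 k3
  + 2 * a1 * a2 * qf M k1 k2 + 2 * a1 * a3 * qf M k1 k3 + 2 * a2 * a3 * qf M k2 k3.
Proof. by rewrite /qf /lin3 /=; ring. Qed.


Lemma dot_mulv M v w : dot (mulv M v) w = qf M w v.
Proof. by rewrite qf_dot /dot /mulv /=; ring. Qed.

Variable E : L -> Prop.
Hypothesis E1 : E 1.
Hypothesis EA : forall a b, E a -> E b -> E (a + b).
Hypothesis EN : forall a, E a -> E (- a).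
Hypothesis EM : forall a b, E a -> E b -> E (a * b).
Hypothesis EI : forall a, E a -> E a^-1.
Hypothesis ES : forall w, E (w ^+ 2) -> E w.

Lemma E0 : E 0.
Proof. by rewrite -(subrr 1); apply: EA => //; apply: EN. Qed.
Lemma EX a n : E a -> E (a ^+ n).
Proof. by move=> ha; elim: n => [|n IH]; rewrite ?expr0 // exprS; apply: EM. Qed.
Lemma Enat n : E n%:R.
Proof. by elim: n => [|n IH]; [exact: E0 | rewrite mulrS; apply: EA]. Qed.

Ltac Etac := repeat (first [ assumption | apply: EA | apply: EN | apply: EM
  | apply: EI | apply: EX | apply: Enat | apply: E1 | apply: E0 ]).

Definition Es M := E (m00 M) /\ E (m01 M) /\ E (m02 M) /\ E (m11 M) /\ E (m12 M) /\ E (m22 M).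
Definition Ev v := E (c0 v) /\ E (c1 v) /\ E (c2 v).

Lemma Es_splus F G T : Es F -> Es G -> E T -> Es (splus F G T).
Proof.
case: F => ??????; case: G => ??????.
by rewrite /Es /splus /= => [[?[?[?[?[??]]]]] [?[?[?[?[??]]]]] ?]; do !split; Etac.
Qed.

Lemma kern_root F G T : Es F -> Es G -> E T -> det (splus F G T) = 0 ->
  trAG (splus F G T) G != 0 ->
  exists k, [/\ Ev k, mulv (splus F G T) k = zero3 & qf G k k != 0].
Proof.
move=> EF EG ET hd ht.
have [k [hk h1 h2]] := kernel_lemma hd ht.
exists k; split=> //.
have := Es_splus EF EG ET; case: (splus F G T) hk => ?????? hk [?[?[?[?[??]]]]].
by case: hk => [->|[->|->]]; rewrite /Ev /col0 /col1 /col2 /A00 /A01 /A02 /A11 /A12 /A22 /=;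
  do !split; Etac.
Qed.


Lemma core F G Q (c3 t : L) (b : v3) : (2 : L) != 0 ->
  Es F -> Es G -> Es Q -> E c3 -> E t -> c3 != 0 -> p3 F G != 0 ->
  disc (p0 F G) (p1 F G) (p2 F G) (p3 F G) != 0 ->
  p0 F G + p1 F G * t + p2 F G * t ^+ 2 + p3 F G * t ^+ 3 = 0 ->
  qf F b b = 0 -> qf G b b = 0 -> qf Q b b = c3 -> Ev b.
Proof.
move=> h2 EF EG EQ Ec Et hc ha hdisc ht hF hG hQ.
have Ep : E (p0 F G) /\ E (p1 F G) /\ E (p2 F G) /\ E (p3 F G).
  move: EF EG; case: F {hF ht hdisc ha} => ??????; case: G {hG} => ??????.
  rewrite /Es /p0 /p1 /p2 /p3 /det /trAG /A00 /A01 /A02 /A11 /A12 /A22 /=.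
  by move=> [?[?[?[?[??]]]]] [?[?[?[?[??]]]]]; do !split; Etac.
case: Ep => Ea0 [Ea1 [Ea2 Ea]].
have hdet := det_splus F G; have htr := trAG_splus F G.
move: hdisc ht ha Ea0 Ea1 Ea2 Ea hdet htr.
set a0 := p0 F G; set a1 := p1 F G; set a2 := p2 F G; set a := p3 F G.
move=> hdisc ht ha Ea0 Ea1 Ea2 Ea hdet htr.
set B := a2 + a * t; set C := a1 + a2 * t + a * t ^+ 2.
have [r hr] := sqrt_exists (B ^+ 2 - 4 * a * C).
have Er : E r by apply: ES; rewrite hr /B /C; Etac.
set T2 := (r - B) / (2 * a); set T3 := (- r - B) / (2 * a).
have ET2 : E T2 by rewrite /T2 /B; Etac.
have ET3 : E T3 by rewrite /T3 /B; Etac.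
have h4 : (4 : L) != 0.
  by rewrite (_ : 4 = 2 * 2 :> L) ?mulf_neq0 //; ring.
have hS : a * (T2 + T3) = - B by rewrite /T2 /T3; field; rewrite ha h2.
have hP : a * (T2 * T3) = C.
  have -> : a * (T2 * T3) = (B ^+ 2 - r ^+ 2) / (4 * a).
    by rewrite /T2 /T3; field; rewrite ?ha ?h2 ?h4.
  by rewrite hr; field; rewrite ?ha ?h2 ?h4.
have hp2 : a2 = - (a * (t + T2 + T3)).
  have -> : a * (t + T2 + T3) = a * t + a * (T2 + T3) by ring.
  by rewrite hS /B; ring.
have hp1 : a1 = a * (t * T2 + t * T3 + T2 * T3).
  rewrite (_ : a * (t * T2 + t * T3 + T2 * T3) = t * (a * (T2 + T3)) + a * (T2 * T3)).
    by rewrite hS hP /B /C; ring.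
  by ring.
have hp0 : a0 = - (a * t * T2 * T3).
  have -> : a * t * T2 * T3 = t * (a * (T2 * T3)) by ring.
  rewrite hP.
  have -> : a0 = (a0 + a1 * t + a2 * t ^+ 2 + a * t ^+ 3) - t * C by rewrite /C; ring.
  by rewrite ht sub0r.
have Pdet s : det (splus F G s) = a * (s - t) * (s - T2) * (s - T3).
  by rewrite hdet hp0 hp1 hp2; ring.
have Ptr s : trAG (splus F G s) G =
    a * ((s - t) * (s - T2) + (s - t) * (s - T3) + (s - T2) * (s - T3)).
  by rewrite htr hp1 hp2; ring.
have hdisc' : a ^+ 4 * ((t - T2) * (t - T3) * (T2 - T3)) ^+ 2 != 0.
  by move: hdisc; rewrite /disc hp0 hp1 hp2; congr (_ != _); ring.
have d12 : t - T2 != 0.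
  by apply: contra hdisc' => /eqP ->; rewrite !mul0r expr0n mulr0.
have d13 : t - T3 != 0.
  by apply: contra hdisc' => /eqP ->; rewrite mulr0 mul0r expr0n mulr0.
have d23 : T2 - T3 != 0.
  by apply: contra hdisc' => /eqP ->; rewrite mulr0 expr0n mulr0.
have n12 : t != T2 by rewrite -subr_eq0.
have n13 : t != T3 by rewrite -subr_eq0.
have n23 : T2 != T3 by rewrite -subr_eq0.
have [k1 [Ek1 hk1 g1]] : exists k, [/\ Ev k, mulv (splus F G t) k = zero3 & qf G k k != 0].
  apply: kern_root => //; first by rewrite Pdet subrr !(mulr0, mul0r).
  by rewrite Ptr subrr !(mulr0, mul0r, add0r, addr0) !mulf_neq0.
have [k2 [Ek2 hk2 g2]] : exists k, [/\ Ev k, mulv (splus F G T2) k = zero3 & qf G k k != 0].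
  apply: kern_root => //; first by rewrite Pdet subrr !(mulr0, mul0r).
  rewrite Ptr subrr !(mulr0, mul0r, add0r, addr0) !mulf_neq0 //.
    by rewrite -oppr_eq0 opprB.
have [k3 [Ek3 hk3 g3]] : exists k, [/\ Ev k, mulv (splus F G T3) k = zero3 & qf G k k != 0].
  apply: kern_root => //; first by rewrite Pdet subrr !(mulr0, mul0r).
  rewrite Ptr subrr !(mulr0, mul0r, add0r, addr0) !mulf_neq0 //;
    by rewrite -oppr_eq0 opprB.
have [o12 f12] := orth hk1 hk2 n12.
have [o13 f13] := orth hk1 hk3 n13.
have [o23 f23] := orth hk2 hk3 n23.
have s1 := qf_self hk1; have s2 := qf_self hk2; have s3 := qf_self hk3.
set y1 := qf G k1 k1 in g1 s1; set y2 := qf G k2 k2 in g2 s2; set y3 := qf G k3 k3 in g3 s3.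
have hW : tdet (mulv G k1) (mulv G k2) (mulv G k3) != 0.
  have := cauchy_binet (mulv G k1) (mulv G k2) (mulv G k3) k1 k2 k3.
  rewrite !dot_mulv -/y1 -/y2 -/y3 (qfC G k2 k1) (qfC G k3 k1) (qfC G k3 k2) o12 o13 o23.
  rewrite /tdet /= => e; apply/negP => /eqP h0; move: e; rewrite h0 mul0r.
  rewrite !(mulr0, mul0r, subr0, addr0, sub0r) => /esym /eqP.
  by rewrite !mulf_eq0 (negbTE g1) (negbTE g2) (negbTE g3).
set be1 := qf G k1 b / y1; set be2 := qf G k2 b / y2; set be3 := qf G k3 b / y3.
have hb : b = lin3 be1 be2 be3 k1 k2 k3.
  set e := V3 (c0 b - c0 (lin3 be1 be2 be3 k1 k2 k3))
              (c1 b - c1 (lin3 be1 be2 be3 k1 k2 k3))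
              (c2 b - c2 (lin3 be1 be2 be3 k1 k2 k3)).
  have qe M k : qf M k e = qf M k b - (be1 * qf M k k1 + be2 * qf M k k2 + be3 * qf M k k3).
    by rewrite /e /qf /lin3 /=; ring.
  have : e = zero3.
    apply: (cramer hW); rewrite dot_mulv qfC qe.
    - rewrite o12 o13 -/y1 /be1; field; by rewrite g1.
    - rewrite (qfC G k2 k1) o12 o23 -/y2 /be2; field; by rewrite g2.
    - rewrite (qfC G k3 k1) (qfC G k3 k2) o13 o23 -/y3 /be3; field; by rewrite g3.
  move=> he; have eta (v : v3) : v = V3 (c0 v) (c1 v) (c2 v) by case: v.
  rewrite {1}(eta b) (eta (lin3 be1 be2 be3 k1 k2 k3)); congr V3;
    apply/eqP; rewrite -subr_eq0; apply/eqP.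
  - exact: (congr1 c0 he).
  - exact: (congr1 c1 he).
  - exact: (congr1 c2 he).
have EQv M v w : Es M -> Ev v -> Ev w -> E (qf M v w).
  case: M => ??????; case: v => ???; case: w => ???.
  by rewrite /Es /Ev /qf /= => [[?[?[?[?[??]]]]] [?[??]] [?[??]]]; Etac.
have hQ0 := hQ.
rewrite hb !qf_lin3 in hF hG hQ.
rewrite o12 o13 o23 !mulr0 !addr0 -/y1 -/y2 -/y3 in hG.
rewrite f12 f13 f23 s1 s2 s3 !mulr0 !addr0 in hF.
set z1 := be1 ^+ 2 * y1 in hG; set z2 := be2 ^+ 2 * y2 in hG; set z3 := be3 ^+ 2 * y3 in hG.
have hz2 : t * z1 + T2 * z2 + T3 * z3 = 0.
  by rewrite -oppr0 -[X in - X]hF /z1 /z2 /z3; ring.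
set rho := z1 / (T2 - T3).
have ez1 : z1 = rho * (T2 - T3) by rewrite /rho; field; rewrite d23.
have ez2 : z2 = rho * (T3 - t).
  have : (T2 - T3) * z2 = (T3 - t) * z1.
    apply/eqP; rewrite -subr_eq0; apply/eqP.
    have -> : (T2 - T3) * z2 - (T3 - t) * z1 = (t * z1 + T2 * z2 + T3 * z3) - T3 * (z1 + z2 + z3) by ring.
    by rewrite hz2 hG mulr0 subr0.
  by move=> h; rewrite /rho; apply: (mulfI d23); rewrite h; field; rewrite d23.
have ez3 : z3 = rho * (t - T2).
  have -> : z3 = (z1 + z2 + z3) - (z1 + z2) by ring.
  by rewrite hG ez1 ez2; ring.
have hbe (be y d : L) : y != 0 -> be ^+ 2 * y = rho * d -> be ^+ 2 = rho * d / y.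
  by move=> hy <-; field; rewrite hy.
have eb1 := hbe _ _ _ g1 ez1; have eb2 := hbe _ _ _ g2 ez2; have eb3 := hbe _ _ _ g3 ez3.
have sq0 (w : L) : w ^+ 2 = 0 -> w = 0 by move/eqP; rewrite expf_eq0 => /andP[_ /eqP].
have hrho : rho != 0.
  apply/negP => /eqP r0; move: hQ; rewrite eb1 eb2 eb3 r0 !mul0r.
  have -> : be1 = 0 by apply: sq0; rewrite eb1 r0 !mul0r.
  have -> : be2 = 0 by apply: sq0; rewrite eb2 r0 !mul0r.
  have -> : be3 = 0 by apply: sq0; rewrite eb3 r0 !mul0r.
  by rewrite !(mul0r, mulr0, addr0) => /esym /eqP; rewrite (negbTE hc).
have [rh hrh] := sqrt_exists rho.
have rh0 : rh != 0 by apply: contra hrho => /eqP h0; rewrite -hrh h0 expr0n.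
have Ey1 : E y1 by apply: EQv.
have Ey2 : E y2 by apply: EQv.
have Ey3 : E y3 by apply: EQv.
have Es1 : E (be1 / rh).
  apply: ES; rewrite expr_div_n hrh eb1 (_ : rho * (T2 - T3) / y1 / rho = (T2 - T3) / y1).
    by Etac.
  by field; rewrite hrho g1.
have Es2 : E (be2 / rh).
  apply: ES; rewrite expr_div_n hrh eb2 (_ : rho * (T3 - t) / y2 / rho = (T3 - t) / y2).
    by Etac.
  by field; rewrite hrho g2.
have Es3 : E (be3 / rh).
  apply: ES; rewrite expr_div_n hrh eb3 (_ : rho * (t - T2) / y3 / rho = (t - T2) / y3).
    by Etac.
  by field; rewrite hrho g3.
set v := lin3 (be1 / rh) (be2 / rh) (be3 / rh) k1 k2 k3.
have hbv : lin3 be1 be2 be3 k1 k2 k3 = V3 (rh * c0 v) (rh * c1 v) (rh * c2 v).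
  by rewrite /v /lin3 /=; congr V3; field; rewrite rh0.
have Ev_v : Ev v.
  case: Ek1 => [? [? ?]]; case: Ek2 => [? [? ?]]; case: Ek3 => [? [? ?]].
  by rewrite /v /lin3 /Ev /=; do !split; Etac.
have qsc : qf Q (V3 (rh * c0 v) (rh * c1 v) (rh * c2 v)) (V3 (rh * c0 v) (rh * c1 v) (rh * c2 v))
    = rh ^+ 2 * qf Q v v by rewrite /qf /=; ring.
rewrite hb hbv qsc in hQ0.
have qv0 : qf Q v v != 0.
  by apply: contra hc => /eqP h0; rewrite -hQ0 h0 mulr0.
have Erh : E rh.
  apply: ES; rewrite (_ : rh ^+ 2 = c3 / qf Q v v); first by have ? := EQv _ _ _ EQ Ev_v Ev_v; Etac.
  by rewrite -hQ0; field; rewrite qv0.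
case: Ev_v => [? [? ?]].
by rewrite hb hbv /Ev /=; do !split; Etac.
Qed.

End Core.

Record ops (T : Type) := Ops {
  oA : T -> T -> T; oM : T -> T -> T; oN : T -> T; oC : nat -> T; oE : T -> nat -> T }.
Definition Lops (R : ringType) : ops R :=
  @Ops R (fun a b => a + b) (fun a b => a * b) (fun a => - a) (fun n => n%:R)
    (fun a n => a ^+ n).
Definition Tops (R : Type) : ops (GRing.term R) :=
  @Ops _ (@GRing.Add R) (@GRing.Mul R) (@GRing.Opp R) (GRing.NatConst R) (@GRing.Exp R).

Section Gen.
Variables (T : Type) (o : ops T).
Local Notation "a + b" := (oA o a b).
Local Notation "a * b" := (oM o a b).
Local Notation "- a" := (oN o a).
Local Notation "a - b" := (oA o a (oN o b)).
Local Notation "a ^+ n" := (oE o a n).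
Local Notation "n %:R" := (oC o n).

Definition gV a b c := (b - a) * (c - a) * (c - b).
Definition galpha (u0 u1 u2 u3 z0 z1 z2 z3 : T) : T * T * T * T :=
  (gV z1 z2 z3 * (u1 * u2 * u3), - gV z0 z2 z3 * (u0 * u2 * u3),
   gV z0 z1 z3 * (u0 * u1 * u3), - gV z0 z1 z2 * (u0 * u1 * u2)).
Definition gs (u0 u1 u2 u3 z0 z1 z2 z3 : T) (m : nat) : T :=
  let: (a0, a1, a2, a3) := galpha u0 u1 u2 u3 z0 z1 z2 z3 in
  a0 * z0 ^+ m + a1 * z1 ^+ m + a2 * z2 ^+ m + a3 * z3 ^+ m.
Definition gc (u0 u1 u2 u3 z0 z1 z2 z3 : T) : T :=
  let: (a0, a1, a2, a3) := galpha u0 u1 u2 u3 z0 z1 z2 z3 in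
  - (a0 * u0 ^+ 2 + a1 * u1 ^+ 2 + a2 * u2 ^+ 2 + a3 * u3 ^+ 2).

Definition gdet a00 a01 a02 a11 a12 a22 :=
  a00 * (a11 * a22 - a12 ^+ 2) - a01 * (a01 * a22 - a12 * a02)
  + a02 * (a01 * a12 - a11 * a02).
Definition gtrAG a00 a01 a02 a11 a12 a22 g00 g01 g02 g11 g12 g22 :=
  (a11 * a22 - a12 ^+ 2) * g00 + 2%:R * (a02 * a12 - a01 * a22) * g01
  + 2%:R * (a01 * a12 - a02 * a11) * g02 + (a00 * a22 - a02 ^+ 2) * g11
  + 2%:R * (a01 * a02 - a00 * a12) * g12 + (a00 * a11 - a01 ^+ 2) * g22.
Definition gdisc a0 a1 a2 a3 :=
  a2 ^+ 2 * a1 ^+ 2 - 4%:R * a3 * a1 ^+ 3 - 4%:R * a2 ^+ 3 * a0 - 27%:R * a3 ^+ 2 * a0 ^+ 2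
  + 18%:R * a3 * a2 * a1 * a0.

Variables (l x : nat -> T).
Definition gu k := l k ^+ 2.
Definition gsj j m := gs (gu 0) (gu 1) (gu 2) (gu j) (x 0) (x 1) (x 2) (x j) m.
Definition gcj j := gc (gu 0) (gu 1) (gu 2) (gu j) (x 0) (x 1) (x 2) (x j).
Definition gF m := gcj 4 * gsj 3 m - gcj 3 * gsj 4 m.
Definition gG m := gcj 5 * gsj 3 m - gcj 3 * gsj 5 m.
Definition gp0 := gdet (gF 0) (gF 1) (gF 2) (gF 2) (gF 3) (gF 4).
Definition gp3 := gdet (gG 0) (gG 1) (gG 2) (gG 2) (gG 3) (gG 4).
Definition gp1 := gtrAG (gF 0) (gF 1) (gF 2) (gF 2) (gF 3) (gF 4)
                        (gG 0) (gG 1) (gG 2) (gG 2) (gG 3) (gG 4).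
Definition gp2 := gtrAG (gG 0) (gG 1) (gG 2) (gG 2) (gG 3) (gG 4)
                        (gF 0) (gF 1) (gF 2) (gF 2) (gF 3) (gF 4).
Definition gD := gu 0 * gu 1 * gu 2 * gV (x 0) (x 1) (x 2) *
                 (gcj 3 * gp3 * gdisc gp0 gp1 gp2 gp3).
End Gen.

Definition tl (R : Type) (k : nat) : GRing.term R := GRing.Var R k.
Definition tx (R : Type) (k : nat) : GRing.term R := GRing.Var R (6 + k).

Definition Dterm (R : Type) := gD (Tops R) (@tl R) (@tx R).

Fixpoint tgood (R : Type) (t : GRing.term R) : bool :=
  match t with
  | GRing.Var i => (i < 12)%N
  | GRing.Const _ => false
  | GRing.NatConst _ => true
  | GRing.Add a b => tgood a && tgood b
  | GRing.Opp a => tgood a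
  | GRing.NatMul a _ => tgood a
  | GRing.Mul a b => tgood a && tgood b
  | GRing.Inv _ => false
  | GRing.Exp a _ => tgood a
  end.

Lemma Dgood (R : Type) : tgood (Dterm R).
Proof. by vm_compute. Qed.

Section EvalL.
Variable L : closedFieldType.
Variable e : seq L.
Lemma eval_D : GRing.eval e (Dterm L) = gD (Lops L) (fun k => e`_k) (fun k => e`_(6 + k)).
Proof. reflexivity. Qed.
End EvalL.

Definition zpow (z : Z) (n : nat) : Z := Nat.iter n (Z.mul z) 1%coqZ.
Fixpoint evalZ (R : Type) (eZ : seq Z) (t : GRing.term R) : Z :=
  match t with
  | GRing.Var i => nth 0%coqZ eZ i
  | GRing.Const _ => 0%coqZ
  | GRing.NatConst n => Z.of_nat n
  | GRing.Add a b => (evalZ eZ a + evalZ eZ b)%coqZ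
  | GRing.Opp a => (- evalZ eZ a)%coqZ
  | GRing.NatMul a n => (evalZ eZ a * Z.of_nat n)%coqZ
  | GRing.Mul a b => (evalZ eZ a * evalZ eZ b)%coqZ
  | GRing.Inv _ => 0%coqZ
  | GRing.Exp a n => zpow (evalZ eZ a) n
  end.

Definition wZ : seq Z := [:: 1; 1; 1; 2; 2; 2; 0; 1; 2; 3; 4; 5]%coqZ.

Lemma DZ (R : Type) : evalZ wZ (Dterm R) <> 0%coqZ.
Proof. by vm_compute. Qed.

Section Z2L.
Variable L : fieldType.
Definition fZ (z : Z) : L := (int_of_Z z)%:~R.
Lemma fZ_add a b : fZ (a + b) = fZ a + fZ b.
Proof. by rewrite /fZ -intrD; congr (_%:~R); lia. Qed.
Lemma fZ_opp a : fZ (- a) = - fZ a.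
Proof. by rewrite /fZ -intrN; congr (_%:~R); lia. Qed.
Lemma fZ_mul a b : fZ (a * b) = fZ a * fZ b.
Proof. by rewrite /fZ -intrM; congr (_%:~R); lia. Qed.
Lemma fZ_nat n : fZ (Z.of_nat n) = n%:R.
Proof. by rewrite /fZ (_ : int_of_Z (Z.of_nat n) = n%:Z) //; lia. Qed.
Lemma fZ_pow a n : fZ (zpow a n) = fZ a ^+ n.
Proof.
elim: n => [|n IH]; first by rewrite expr0 /zpow /= (fZ_nat 1).
by rewrite /zpow /= fZ_mul -/(zpow a n) IH exprS.
Qed.

Lemma eval_fZ (e : seq L) (eZ : seq Z) (t : GRing.term L) :
  (forall i, (i < 12)%N -> e`_i = fZ (nth 0%coqZ eZ i)) -> tgood t ->
  GRing.eval e t = fZ (evalZ eZ t).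
Proof.
move=> he; elim: t => //=.
- move=> n _. exact: (esym (fZ_nat n)).
- by move=> a IHa b IHb /andP[ga gb]; rewrite IHa // IHb // fZ_add.
- by move=> a IHa ga; rewrite IHa // fZ_opp.
- by move=> a IHa n ga; rewrite IHa // fZ_mul fZ_nat mulr_natr.
- by move=> a IHa b IHb /andP[ga gb]; rewrite IHa // IHb // fZ_mul.
- by move=> a IHa n ga; rewrite IHa // fZ_pow.
Qed.

Hypothesis charL : [pchar L] =i pred0.
Lemma fZ_neq0 z : z <> 0%coqZ -> fZ z != 0.
Proof.
move=> hz; rewrite /fZ.
have : int_of_Z z != 0 by apply/eqP => h; apply: hz; lia.
case: (int_of_Z z) => n.
- by rewrite /= => hn; have /pcharf0P -> := charL.
- by move=> _; rewrite NegzE intrN oppr_eq0 /=; have /pcharf0P -> := charL.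
Qed.
End Z2L.

Section Rad.
Variable L : fieldType.
Implicit Types (ok : nat -> bool) (S : seq L).

Lemma rad0 ok S : rad_expr ok S 0.
Proof. by rewrite -(subrr (1 : L)); apply: RE_add; [apply: RE_one | apply: RE_opp; apply: RE_one]. Qed.
Lemma radnat ok S n : rad_expr ok S n%:R.
Proof. by elim: n => [|n IH]; [exact: rad0 | rewrite mulrS; apply: RE_add => //; apply: RE_one]. Qed.
Lemma radX ok S a n : rad_expr ok S a -> rad_expr ok S (a ^+ n).
Proof. by move=> ha; elim: n => [|n IH]; [rewrite expr0; apply: RE_one | rewrite exprS; apply: RE_mul]. Qed.
Lemma radMn ok S a n : rad_expr ok S a -> rad_expr ok S (a *+ n).
Proof. by move=> ha; elim: n => [|n IH]; [rewrite mulr0n; apply: rad0 | rewrite mulrS; apply: RE_add]. Qed.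

Lemma rad_mono ok ok' S S' z : (forall n, ok n -> ok' n) -> {subset S <= S'} ->
  rad_expr ok S z -> rad_expr ok' S' z.
Proof.
move=> hok hS h; elim: h.
- by move=> w hw; apply: RE_gen; apply: hS.
- exact: RE_one.
- by move=> a b _ ha _ hb; apply: RE_add.
- by move=> a _ ha; apply: RE_opp.
- by move=> a b _ ha _ hb; apply: RE_mul.
- by move=> a _ ha; apply: RE_inv.
- by move=> n w hn _ hw; apply: (RE_root (hok _ hn)).
Qed.

Lemma rad_subst ok S t z : rad_expr ok S t -> rad_expr ok (t :: S) z -> rad_expr ok S z.
Proof.
move=> ht h; elim: h.
- by move=> w; rewrite inE => /orP[/eqP -> // | hw]; apply: RE_gen.
- exact: RE_one.
- by move=> a b _ ha _ hb; apply: RE_add.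
- by move=> a _ ha; apply: RE_opp.
- by move=> a b _ ha _ hb; apply: RE_mul.
- by move=> a _ ha; apply: RE_inv.
- by move=> n w hn _ hw; apply: (RE_root hn).
Qed.
End Rad.

Lemma nth_data (L : ringType) (f : 'I_6 -> L) i : (i < 6)%N ->
  [seq f j | j <- enum 'I_6]`_i = f (inord i).
Proof.
move=> hi; rewrite (nth_map ord0) ?size_enum_ord //; congr f.
by apply: val_inj; rewrite /= nth_enum_ord // inordK.
Qed.

Lemma penv_l (L : ringType) (lam x y : 'I_6 -> L) i : (i < 6)%N ->
  (point_env lam x y)`_i = lam (inord i).
Proof. by move=> hi; rewrite /point_env nth_cat size_map size_enum_ord hi nth_data. Qed.
Lemma penv_x (L : ringType) (lam x y : 'I_6 -> L) i : (i < 6)%N ->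
  (point_env lam x y)`_(6 + i) = x (inord i).
Proof.
move=> hi; rewrite /point_env nth_cat size_map size_enum_ord ltnNge leq_addr /=.
by rewrite addKn nth_cat size_map size_enum_ord hi nth_data.
Qed.
Lemma size_data (L : ringType) (lam x : 'I_6 -> L) : size (data_seq lam x) = 12%N.
Proof. by rewrite /data_seq size_cat !size_map -enumT !size_enum_ord. Qed.

Lemma penv_data (L : ringType) (lam x y : 'I_6 -> L) i : (i < 12)%N ->
  (point_env lam x y)`_i = (data_seq lam x)`_i.
Proof.
by move=> hi; rewrite /point_env catA -/(data_seq lam x) nth_cat size_data hi.
Qed.
Lemma good_rat (L : fieldType) (lam x y : 'I_6 -> L) (t : GRing.term L) : tgood t ->
  rational_in (data_seq lam x) (GRing.eval (point_env lam x y) t).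
Proof.
elim: t => //=.
- move=> i hi; rewrite penv_data //; apply: RE_gen; apply: mem_nth.
  by rewrite size_data.
- by move=> n _; apply: radnat.
- by move=> a IHa b IHb /andP[ga gb]; apply: RE_add; [apply: IHa | apply: IHb].
- by move=> a IHa ga; apply: RE_opp; apply: IHa.
- by move=> a IHa n ga; apply: radMn; apply: IHa.
- by move=> a IHa b IHb /andP[ga gb]; apply: RE_mul; [apply: IHa | apply: IHb].
- by move=> a IHa n ga; apply: radX; apply: IHa.
Qed.

Lemma keyQ (L : closedFieldType) (u0 u1 u2 u3 z0 z1 z2 z3 h0 h1 h2 h3 h4 h5 : L) :
  let eqk u z := u ^+ 2 + (h3 + z * h4 + z ^+ 2 * h5) * u + (h0 + z * h1 + z ^+ 2 * h2) ^+ 2 in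
  eqk u0 z0 = 0 -> eqk u1 z1 = 0 -> eqk u2 z2 = 0 -> eqk u3 z3 = 0 ->
  let s := gs (Lops L) u0 u1 u2 u3 z0 z1 z2 z3 in
  qf (S3 (s 0%N) (s 1%N) (s 2%N) (s 2%N) (s 3%N) (s 4%N)) (V3 h0 h1 h2) (V3 h0 h1 h2)
  = gc (Lops L) u0 u1 u2 u3 z0 z1 z2 z3.
Proof.
move=> eqk e0 e1 e2 e3 s.
apply/eqP; rewrite -subr_eq0; apply/eqP.
pose a0 := (z2 - z1) * (z3 - z1) * (z3 - z2) * (u1 * u2 * u3).
pose a1 := - ((z2 - z0) * (z3 - z0) * (z3 - z2)) * (u0 * u2 * u3).
pose a2 := (z1 - z0) * (z3 - z0) * (z3 - z1) * (u0 * u1 * u3).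
pose a3 := - ((z1 - z0) * (z2 - z0) * (z2 - z1)) * (u0 * u1 * u2).
transitivity (a0 * eqk u0 z0 + a1 * eqk u1 z1 + a2 * eqk u2 z2 + a3 * eqk u3 z3);
  last by rewrite e0 e1 e2 e3; ring.
rewrite /eqk /qf /s /gs /gc /galpha /gV /a0 /a1 /a2 /a3 /=.
ring.
Qed.

Lemma interp (L : fieldType) (z0 z1 z2 h3 h4 h5 : L) :
  z0 != z1 -> z0 != z2 -> z1 != z2 ->
  let A z := h3 + z * h4 + z ^+ 2 * h5 in
  let d0 := (z0 - z1) * (z0 - z2) in
  let d1 := (z1 - z0) * (z1 - z2) in
  let d2 := (z2 - z0) * (z2 - z1) in
  [/\ h5 = A z0 / d0 + A z1 / d1 + A z2 / d2,
      h4 = - (A z0 * (z1 + z2) / d0 + A z1 * (z0 + z2) / d1 + A z2 * (z0 + z1) / d2)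
    & h3 = A z0 * (z1 * z2) / d0 + A z1 * (z0 * z2) / d1 + A z2 * (z0 * z1) / d2].
Proof.
move=> h01 h02 h12 A d0 d1 d2.
have n01 : z0 - z1 != 0 by rewrite subr_eq0.
have n02 : z0 - z2 != 0 by rewrite subr_eq0.
have n12 : z1 - z2 != 0 by rewrite subr_eq0.
have n10 : z1 - z0 != 0 by rewrite subr_eq0 eq_sym.
have n20 : z2 - z0 != 0 by rewrite subr_eq0 eq_sym.
have n21 : z2 - z1 != 0 by rewrite subr_eq0 eq_sym.
rewrite /A /d0 /d1 /d2; split; field; by rewrite ?n01 ?n02 ?n12 ?n10 ?n20 ?n21.
Qed.

Section Cardano.
Variable L : closedFieldType.
Hypothesis charL : [pchar L] =i pred0.
Lemma ncharf_neq0 n : (0 < n)%N -> (n%:R : L) != 0.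
Proof. by move=> hn; have /pcharf0P -> := charL; rewrite -lt0n. Qed.

Variable S : seq L.
Local Notation RI := (radical_in S).
Lemma RIsq w : RI (w ^+ 2) -> RI w. Proof. exact: RE_root. Qed.
Lemma RIcu w : RI (w ^+ 3) -> RI w. Proof. exact: RE_root. Qed.
Ltac Rtac := repeat (first [ assumption | apply: RE_add | apply: RE_opp | apply: RE_mul
  | apply: RE_inv | apply: radX | apply: radnat | apply: RE_one | apply: rad0 ]).

Lemma cubic_rad (a b c d t : L) : a != 0 -> RI a -> RI b -> RI c -> RI d ->
  a * t ^+ 3 + b * t ^+ 2 + c * t + d = 0 -> RI t.
Proof.
move=> ha Ea Eb Ec Ed ht.
have h2 : (2 : L) != 0 by apply: ncharf_neq0.
have h3 : (3 : L) != 0 by apply: ncharf_neq0.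
have h27 : (27 : L) != 0 by apply: ncharf_neq0.
have h4 : (4 : L) != 0 by apply: ncharf_neq0.
set y := t + b / (3 * a).
set p := (3 * a * c - b ^+ 2) / (3 * a ^+ 2).
set q := (2 * b ^+ 3 - 9 * a * b * c + 27 * a ^+ 2 * d) / (27 * a ^+ 3).
have Ep : RI p by rewrite /p; Rtac.
have Eq : RI q by rewrite /q; Rtac.
have hy : y ^+ 3 + p * y + q = 0.
  have : a * (y ^+ 3 + p * y + q) = a * t ^+ 3 + b * t ^+ 2 + c * t + d.
    by rewrite /y /p /q; field; rewrite ?ha ?h3 ?h27.
  by rewrite ht => /eqP; rewrite mulf_eq0 (negbTE ha) /= => /eqP.
suff Ey : RI y.
  by rewrite (_ : t = y - b / (3 * a)); [Rtac | rewrite /y; ring].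
have [r hr] := sqrt_exists (y ^+ 2 + 4 * p / 3).
set u := (y + r) / 2.
have hu : u ^+ 2 - y * u - p / 3 = 0.
  rewrite /u; apply/eqP; rewrite -subr_eq0; apply/eqP.
  have -> : ((y + r) / 2) ^+ 2 - y * ((y + r) / 2) - p / 3 - 0 = (r ^+ 2 - (y ^+ 2 + 4 * p / 3)) / 4.
    by field; rewrite ?h2 ?h3 ?h4.
  by rewrite hr subrr mul0r.
have [u0|u0] := eqVneq u 0.
  have p0 : p = 0.
    have -> : p = 3 * (u ^+ 2 - y * u) - 3 * (u ^+ 2 - y * u - p / 3) by field; rewrite ?h3.
    by rewrite hu u0; ring.
  apply: RIcu; rewrite (_ : y ^+ 3 = - q); first by Rtac.
  by apply/eqP; rewrite -addr_eq0 -[X in _ == X]hy p0 mul0r addr0.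
have yu : y = u - p / (3 * u).
  apply/eqP; rewrite -subr_eq0; apply/eqP.
  have -> : y - (u - p / (3 * u)) = - (u ^+ 2 - y * u - p / 3) / u.
    by field; rewrite ?u0 ?h3.
  by rewrite hu oppr0 mul0r.
have h6 : (u ^+ 3) ^+ 2 + q * u ^+ 3 - p ^+ 3 / 27 = 0.
  have -> : (u ^+ 3) ^+ 2 + q * u ^+ 3 - p ^+ 3 / 27 =
    u ^+ 3 * ((u - p / (3 * u)) ^+ 3 + p * (u - p / (3 * u)) + q).
    by field; rewrite ?u0 ?h3 ?h27.
  by rewrite -yu hy mulr0.
set s := 2 * u ^+ 3 + q.
have Es : RI s.
  apply: RIsq; rewrite (_ : s ^+ 2 = q ^+ 2 + 4 * p ^+ 3 / 27); first by Rtac.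
  rewrite /s; apply/eqP; rewrite -subr_eq0; apply/eqP.
  have -> : (2 * u ^+ 3 + q) ^+ 2 - (q ^+ 2 + 4 * p ^+ 3 / 27) =
            4 * ((u ^+ 3) ^+ 2 + q * u ^+ 3 - p ^+ 3 / 27) by field; rewrite ?h27.
  by rewrite h6 mulr0.
have Eu : RI u.
  apply: RIcu; rewrite (_ : u ^+ 3 = (s - q) / 2); first by Rtac.
  by rewrite /s; field; rewrite h2.
by rewrite yu; Rtac.
Qed.
End Cardano.

Lemma good_rterm (R : unitRingType) (t : GRing.term R) : tgood t -> GRing.rterm t.
Proof. by elim: t => //= [a IHa b IHb /andP[/IHa -> /IHb ->] | a IHa b IHb /andP[/IHa -> /IHb ->]]. Qed.

Lemma sqrt_ex (L : closedFieldType) (d : L) : exists r, r ^+ 2 == d.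
Proof. by have [r hr] := sqrt_exists d; exists r; rewrite hr. Qed.

Lemma qf_pencil (L : closedFieldType) (c c' : L) (s s' : nat -> L) v :
  qf (S3 (c * s 0%N - c' * s' 0%N) (c * s 1%N - c' * s' 1%N) (c * s 2%N - c' * s' 2%N)
         (c * s 2%N - c' * s' 2%N) (c * s 3%N - c' * s' 3%N) (c * s 4%N - c' * s' 4%N)) v v
  = c * qf (S3 (s 0%N) (s 1%N) (s 2%N) (s 2%N) (s 3%N) (s 4%N)) v v
    - c' * qf (S3 (s' 0%N) (s' 1%N) (s' 2%N) (s' 2%N) (s' 3%N) (s' 4%N)) v v.
Proof. by rewrite /qf /=; ring. Qed.

Ltac Etac2 := repeat (first [assumption | apply: RE_add | apply: RE_opp | apply: RE_mul
  | apply: RE_inv | apply: radX | apply: radnat | apply: RE_one | apply: rad0]).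

Section Main.
Variable L : closedFieldType.
Hypothesis charL : [pchar L] =i pred0.

Lemma witness_ok (P5 : {poly L}) :
  exists lam0 x0 y0 : 'I_6 -> L,
    on_curve P5 x0 y0 /\ GRing.eval (point_env lam0 x0 y0) (Dterm L) != 0.
Proof.
pose lam0 : 'I_6 -> L := fun i => @fZ L (nth Z0 wZ i).
pose x0 : 'I_6 -> L := fun i => @fZ L (nth Z0 wZ (6 + i)).
pose y0 : 'I_6 -> L := fun i => xchoose (sqrt_ex P5.[x0 i]).
exists lam0, x0, y0; split.
  by move=> i; apply/eqP; exact: (xchooseP (sqrt_ex P5.[x0 i])).
rewrite (@eval_fZ L _ wZ); first by apply: fZ_neq0 => //; exact: DZ.
- move=> i hi; case: (ltnP i 6) => hi6.
    by rewrite penv_l // /lam0 inordK.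
  have -> : i = (6 + (i - 6))%N by rewrite subnKC.
  by rewrite penv_x ?ltn_subLR // /x0 inordK // ltn_subLR.
- exact: Dgood.
Qed.

Lemma main_part (lam x y : 'I_6 -> L) :
  GRing.eval (point_env lam x y) (Dterm L) != 0 ->
      (exists p : {poly L},
          size p = 5%N /\
          (forall k : nat, rational_in (data_seq lam x) p`_k) /\
          forall H : 'I_6 -> L, is_solution lam x H ->
            exists t : L, root p t /\
              forall k : 'I_6, sqrt_expr_in (t :: data_seq lam x) (H k)) /\
      (forall H : 'I_6 -> L, is_solution lam x H ->
          forall k : 'I_6, radical_in (data_seq lam x) (H k)).
Proof.
set e := point_env lam x y.
set S := data_seq lam x.
pose ll := fun k => e`_k.
pose xx := fun k => e`_(6 + k).
move=> hD0.
have hD : gu (Lops L) ll 0 * gu (Lops L) ll 1 * gu (Lops L) ll 2 * gV (Lops L) (xx 0%N) (xx 1%N) (xx 2%N) *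
  (gcj (Lops L) ll xx 3 * gp3 (Lops L) ll xx *
   gdisc (Lops L) (gp0 (Lops L) ll xx) (gp1 (Lops L) ll xx) (gp2 (Lops L) ll xx) (gp3 (Lops L) ll xx)) != 0.
  by have := hD0; rewrite eval_D.
rewrite !mulf_eq0 !negb_or in hD.
move: hD => /andP[/andP[/andP[/andP[hu0 hu1] hu2] hV] /andP[/andP[hc3 hp3] hdisc]].
pose Fm := S3 (gF (Lops L) ll xx 0) (gF (Lops L) ll xx 1) (gF (Lops L) ll xx 2)
              (gF (Lops L) ll xx 2) (gF (Lops L) ll xx 3) (gF (Lops L) ll xx 4).
pose Gm := S3 (gG (Lops L) ll xx 0) (gG (Lops L) ll xx 1) (gG (Lops L) ll xx 2)
              (gG (Lops L) ll xx 2) (gG (Lops L) ll xx 3) (gG (Lops L) ll xx 4).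
pose Qm j := S3 (gsj (Lops L) ll xx j 0) (gsj (Lops L) ll xx j 1) (gsj (Lops L) ll xx j 2)
              (gsj (Lops L) ll xx j 2) (gsj (Lops L) ll xx j 3) (gsj (Lops L) ll xx j 4).
pose a0 := gp0 (Lops L) ll xx; pose a1 := gp1 (Lops L) ll xx.
pose a2 := gp2 (Lops L) ll xx; pose a3 := gp3 (Lops L) ll xx.
have ratF m : rational_in S (gF (Lops L) ll xx m).
  have g : tgood (gF (Tops L) (@tl L) (@tx L) m) by vm_compute.
  exact: (good_rat lam x y g).
have ratG m : rational_in S (gG (Lops L) ll xx m).
  have g : tgood (gG (Tops L) (@tl L) (@tx L) m) by vm_compute.
  exact: (good_rat lam x y g).
have ratQ m : rational_in S (gsj (Lops L) ll xx 3 m).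
  have g : tgood (gsj (Tops L) (@tl L) (@tx L) 3 m) by vm_compute.
  exact: (good_rat lam x y g).
have ratc3 : rational_in S (gcj (Lops L) ll xx 3).
  have g : tgood (gcj (Tops L) (@tl L) (@tx L) 3) by vm_compute.
  exact: (good_rat lam x y g).
have rata0 : rational_in S a0.
  have g : tgood (gp0 (Tops L) (@tl L) (@tx L)) by vm_compute.
  exact: (good_rat lam x y g).
have rata1 : rational_in S a1.
  have g : tgood (gp1 (Tops L) (@tl L) (@tx L)) by vm_compute.
  exact: (good_rat lam x y g).
have rata2 : rational_in S a2.
  have g : tgood (gp2 (Tops L) (@tl L) (@tx L)) by vm_compute.
  exact: (good_rat lam x y g).
have rata3 : rational_in S a3.
  have g : tgood (gp3 (Tops L) (@tl L) (@tx L)) by vm_compute.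
  exact: (good_rat lam x y g).
have ratx k : (k < 6)%N -> rational_in S (xx k).
  by move=> hk; apply: RE_gen; rewrite /xx /e penv_data ?mem_nth // ?size_data //.
have ha3 : a3 != 0 := hp3.
have [t0 ht0] : exists t, a0 + a1 * t + a2 * t ^+ 2 + a3 * t ^+ 3 = 0.
  have : size (Poly [:: a0; a1; a2; a3]) != 1%N by rewrite (@PolyK _ 0).
  case/closed_rootP => t; rewrite /root horner_Poly /= => /eqP h.
  by exists t; rewrite -h; ring.
pose E := sqrt_expr_in (t0 :: S).
have lift z : rational_in S z -> E z.
  by apply: rad_mono => // w hw; rewrite inE hw orbT.
have E1 : E 1 := RE_one _ _.
have EA : forall a b, E a -> E b -> E (a + b) := @RE_add _ _ _.
have EN : forall a, E a -> E (- a) := @RE_opp _ _ _.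
have EM : forall a b, E a -> E b -> E (a * b) := @RE_mul _ _ _.
have EI : forall a, E a -> E a^-1 := @RE_inv _ _ _.
have ES : forall w, E (w ^+ 2) -> E w := fun w => @RE_root _ _ _ 2 w isT.
have h2 : (2 : L) != 0 := ncharf_neq0 charL (n:=2) isT.
have solE H : is_solution lam x H -> forall k : 'I_6, E (H k).
  move=> hs.
  pose h j := H (inord j).
  have eqs k : (k < 6)%N -> (ll k ^+ 2) ^+ 2 + (h 3 + xx k * h 4 + xx k ^+ 2 * h 5) * ll k ^+ 2
      + (h 0 + xx k * h 1 + xx k ^+ 2 * h 2) ^+ 2 = 0.
    move=> hk; have := hs (inord k); rewrite /spectralR /ll /xx /e penv_l // penv_x //.
    by rewrite -exprM.
  pose b := V3 (h 0) (h 1) (h 2).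
  have kQ3 : qf (Qm 3) b b = gcj (Lops L) ll xx 3 :=
    keyQ (eqs 0%N isT) (eqs 1%N isT) (eqs 2%N isT) (eqs 3%N isT).
  have kQ4 : qf (Qm 4) b b = gcj (Lops L) ll xx 4 :=
    keyQ (eqs 0%N isT) (eqs 1%N isT) (eqs 2%N isT) (eqs 4%N isT).
  have kQ5 : qf (Qm 5) b b = gcj (Lops L) ll xx 5 :=
    keyQ (eqs 0%N isT) (eqs 1%N isT) (eqs 2%N isT) (eqs 5%N isT).
  have hF : qf Fm b b = gcj (Lops L) ll xx 4 * qf (Qm 3) b b - gcj (Lops L) ll xx 3 * qf (Qm 4) b b
    := qf_pencil _ _ _ _ b.
  have hG : qf Gm b b = gcj (Lops L) ll xx 5 * qf (Qm 3) b b - gcj (Lops L) ll xx 3 * qf (Qm 5) b b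
    := qf_pencil _ _ _ _ b.
  rewrite kQ3 kQ4 mulrC subrr in hF.
  rewrite kQ3 kQ5 mulrC subrr in hG.
  have EsF : Es E Fm := conj (lift _ (ratF 0)) (conj (lift _ (ratF 1)) (conj (lift _ (ratF 2)) (conj (lift _ (ratF 2)) (conj (lift _ (ratF 3)) (lift _ (ratF 4)))))).
  have EsG : Es E Gm := conj (lift _ (ratG 0)) (conj (lift _ (ratG 1)) (conj (lift _ (ratG 2)) (conj (lift _ (ratG 2)) (conj (lift _ (ratG 3)) (lift _ (ratG 4)))))).
  have EsQ : Es E (Qm 3) := conj (lift _ (ratQ 0)) (conj (lift _ (ratQ 1)) (conj (lift _ (ratQ 2)) (conj (lift _ (ratQ 2)) (conj (lift _ (ratQ 3)) (lift _ (ratQ 4)))))).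
  have Et0 : E t0 by apply: RE_gen; rewrite mem_head.
  have Eb : Ev E b := core E1 EA EN EM EI ES h2 EsF EsG EsQ (lift _ ratc3) Et0 hc3 hp3 hdisc ht0 hF hG kQ3.
  case: Eb => /= Eh0 [Eh1 Eh2].
  have Ell k : (k < 6)%N -> E (ll k).
    move=> hk; have hk12 : (k < 12)%N by apply: (leq_trans hk).
    by apply: lift; apply: RE_gen; rewrite /ll /e penv_data // mem_nth // size_data.
  have Exx k : (k < 6)%N -> E (xx k) by move=> hk; apply: lift; apply: ratx.
  have EA' k : (k < 3)%N -> ll k != 0 -> E (h 3 + xx k * h 4 + xx k ^+ 2 * h 5).
    move=> hk hl.
    have hu : ll k ^+ 2 != 0 by rewrite expf_neq0.
    have hk6 : (k < 6)%N by apply: (leq_trans hk).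
    have ek := eqs k hk6.
    have El := Ell k hk6; have Ex := Exx k hk6.
    rewrite (_ : h 3 + xx k * h 4 + xx k ^+ 2 * h 5 =
      - ((ll k ^+ 2) ^+ 2 + (h 0 + xx k * h 1 + xx k ^+ 2 * h 2) ^+ 2) / ll k ^+ 2).
      by Etac2.
    apply/eqP; rewrite -subr_eq0; apply/eqP.
    have -> : h 3 + xx k * h 4 + xx k ^+ 2 * h 5 -
        - ((ll k ^+ 2) ^+ 2 + (h 0 + xx k * h 1 + xx k ^+ 2 * h 2) ^+ 2) / ll k ^+ 2 =
      ((ll k ^+ 2) ^+ 2 + (h 3 + xx k * h 4 + xx k ^+ 2 * h 5) * ll k ^+ 2
       + (h 0 + xx k * h 1 + xx k ^+ 2 * h 2) ^+ 2) / ll k ^+ 2.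
      by field.
    by rewrite ek mul0r.
  have EA0 := EA' 0%N isT (proj1 (andP hu0)).
  have EA1 := EA' 1%N isT (proj1 (andP hu1)).
  have EA2 := EA' 2%N isT (proj1 (andP hu2)).
  move: hV => /andP[/andP[d10 d20] d21].
  have n01 : xx 0%N != xx 1%N by rewrite eq_sym -subr_eq0.
  have n02 : xx 0%N != xx 2%N by rewrite eq_sym -subr_eq0.
  have n12 : xx 1%N != xx 2%N by rewrite eq_sym -subr_eq0.
  have [I5 I4 I3] := interp (h 3) (h 4) (h 5) n01 n02 n12.
  have Ex0 := Exx 0%N isT; have Ex1 := Exx 1%N isT; have Ex2 := Exx 2%N isT.
  have Eh5 : E (h 5) by rewrite I5; Etac2.
  have Eh4 : E (h 4) by rewrite I4; Etac2.
  have Eh3 : E (h 3) by rewrite I3; Etac2.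
  move=> k; rewrite -(inord_val k).
  case: k => [[|[|[|[|[|[|m]]]]]] hm] //.
have toRad z : rational_in S z -> radical_in S z by apply: rad_mono.
split.
  have hP : polyseq (Poly [:: 0; a0; a1; a2; a3]) = [:: 0; a0; a1; a2; a3] := @PolyK _ 0 [:: 0; a0; a1; a2; a3] ha3.
  exists (Poly [:: 0; a0; a1; a2; a3]); split; first by rewrite hP.
  split.
    move=> k; rewrite hP; case: k => [|[|[|[|[|k]]]]] //=; try exact: rad0.
    by rewrite nth_nil; exact: rad0.
  move=> H hs; exists t0; split; last exact: solE.
  rewrite /root horner_Poly /=; apply/eqP.
  have -> : (((((0 * t0 + a3) * t0 + a2) * t0 + a1) * t0 + a0) * t0 + 0) =
    t0 * (a0 + a1 * t0 + a2 * t0 ^+ 2 + a3 * t0 ^+ 3) by ring.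
  by rewrite ht0 mulr0.
move=> H hs k.
have Et := solE H hs k.
have rad_t0 : radical_in S t0.
  apply: (cubic_rad charL ha3 (toRad _ rata3) (toRad _ rata2) (toRad _ rata1) (toRad _ rata0)).
  by rewrite -ht0; ring.
apply: (rad_subst rad_t0); apply: (rad_mono _ _ Et) => // n /eqP -> //.
Qed.
End Main.

Unset Implicit Arguments.
Theorem proposition1 (L : closedFieldType) (charL : [pchar L] =i pred0)
    (P5 : {poly L}) (hP5 : size P5 = 6%N) :
  (* genericity: a polynomial D (a term without inversion) in the 18 point
     coordinates, not vanishing identically on configurations on the curve *)
  exists D : GRing.term L,
    GRing.rterm D /\
    (exists lam0 x0 y0 : 'I_6 -> L,
        on_curve P5 x0 y0 /\ GRing.eval (point_env lam0 x0 y0) D != 0) /\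
    forall lam x y : 'I_6 -> L,
      on_curve P5 x y ->
      GRing.eval (point_env lam x y) D != 0 ->
      (* reduction to one polynomial equation of degree 4 in one unknown:
         its coefficients are rational in the data, and every solution H
         is obtained from a root t of it by rational operations and
         square roots *)
      (exists p : {poly L},
          size p = 5%N /\
          (forall k : nat, rational_in (data_seq lam x) p`_k) /\
          forall H : 'I_6 -> L, is_solution lam x H ->
            exists t : L, root p t /\
              forall k : 'I_6, sqrt_expr_in (t :: data_seq lam x) (H k)) /\
      (* consequently: solvability in radicals *)
      (forall H : 'I_6 -> L, is_solution lam x H ->
          forall k : 'I_6, radical_in (data_seq lam x) (H k)).
Proof.
exists (Dterm L); split; first exact: good_rterm (Dgood L).
split; first exact: witness_ok charL P5.
by move=> lam x y _ hD; apply: (main_part charL hD).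
Qed.
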